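(* Let $n\ge4$ be even, $p\ge n+1$ an integer, $c_1$ a positive integer, $a_k=pc_k$, $c_{k+1}=p^2c_k$, and let $T$, $I^{(k)}_i$ and $\lambda_1$ be as in the context. Then for every $k\ge1$ and every $1\le i\le n/2-1$: (1) $\lambda_1(I^{(k)}_{2i+1})\le\frac{1}{p-1}\lambda_1(I^{(k)}_{2i})$; (2) $\lambda_1(I^{(k)}_{2i})\le\frac{1}{c_k}\lambda_1(I^{(k)}_n)$; (3) $\lambda_1(I^{(k)}_{2i})\le\frac{1}{c_k-1}\lambda_1(I^{(k)}_1)$.
   Context: $\pi$ is the permutation of $\{1,\dots,n\}$ with top row $1,2,\dots,n$ and bottom row $n,3,2,5,4,\dots,n-1,n-2,1$. Right Rauzy induction: step ''0'' when the rightmost domain (top) interval is longer, ''1'' when the rightmost image (bottom) interval is longer. For $a,c>0$, $\dot\gamma_{m,a}=1^{n-1-m}0^a10^2$, $\gamma_{a,c}=0\,\dot\gamma_{n-2,a}\cdots\dot\gamma_{2,a}\,1^{c(n-1)}$; its transition matrix $\Theta_{a,c}$ (old lengths $=\Theta_{a,c}\cdot$new lengths) has row $1=(1,c,\dots,c)$, row $n=(1,c+1,\dots,c+1)$, and for $1\le i\le(n-2)/2$: row $2i$ has $0$ in column 1, $2$ in columns $2i,2i+1$, $1$ in the other columns among $2,\dots,n$; row $2i+1$ has $a$ in column $2i$, $a+1$ in column $2i+1$, $0$ elsewhere. $\Theta_k=\Theta_{a_k,c_k}$. $T$ is an IET of $[0,1)$ with permutation $\pi$ whose right Rauzy induction path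 is $\gamma_{a_1,c_1}\gamma_{a_2,c_2}\cdots$; $I^{(k)}$ is the interval on which the induced map lives after the first $k$ blocks and $I^{(k)}_1,\dots,I^{(k)}_n$ its exchanged subintervals; lengths satisfy $\ell^{(k-1)}=\Theta_k\ell^{(k)}$. For $v\ge0$, $|v|$ is the sum of entries and $\overline v=v/|v|$. $\lambda_1$ denotes the $T$-invariant Borel probability measure such that for every $k\ge0$, $(\lambda_1(I^{(k)}_i))_i$ is a positive multiple of $\lim_{m\to\infty}\overline{\Theta_{k+1}\cdots\Theta_me_1}$. *)

(* Defs.v *)
From HB Require Import structures.
From mathcomp Require Import all_boot all_order all_algebra.
From mathcomp Require Import all_classical all_reals all_analysis.
Set Implicit Arguments. Unset Strict Implicit. Unset Printing Implicit Defensive.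
Import Order.TTheory GRing.Theory Num.Theory.
Local Open Scope ring_scope.

(* Entry (i,j) (1-based indices, 1 <= i,j <= n) of the transition matrix
   Theta_{a,c} of the path gamma_{a,c}, exactly as described in the paper. *)
Definition theta_entry (n a c i j : nat) : nat :=
  if i == 1%N then (if j == 1%N then 1%N else c)
  else if i == n then (if j == 1%N then 1%N else c.+1)
  else if ~~ odd i then
    (if j == 1%N then 0%N else if (j == i) || (j == i.+1) then 2%N else 1%N)
  else
    (if j == i.-1 then a else if j == i then a.+1 else 0%N).

(* Theta_{a,c} as an n x n real matrix ('I_n is 0-based, so shift by one). *)
Definition Theta (R : realType) (n a c : nat) : 'M[R]_n :=
  \matrix_(i < n, j < n) (theta_entry n a c i.+1 j.+1)%:R.

(* c_k = p^(2(k-1)) c_1 (so c_{k+1} = p^2 c_k), a_k = p c_k, for k >= 1. *)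
Definition cseq (p c1 k : nat) : nat := (p ^ (2 * k.-1) * c1)%N.
Definition aseq (p c1 k : nat) : nat := (p * cseq p c1 k)%N.

Definition Theta_k (R : realType) (n p c1 k : nat) : 'M[R]_n :=
  Theta R n (aseq p c1 k) (cseq p c1 k).

(* prodTheta k m = Theta_{k+1} Theta_{k+2} ... Theta_m  (identity if m <= k). *)
Fixpoint prodTheta (R : realType) (n p c1 k m : nat) : 'M[R]_n :=
  match m with
  | 0 => 1%:M
  | m'.+1 => if (k <= m')%N then prodTheta R n p c1 k m' *m Theta_k R n p c1 m'.+1
             else 1%:M
  end.

Definition e1 (R : realType) (n : nat) : 'cV[R]_n :=
  \col_(i < n) (if (i : nat) == 0%N then 1 else 0).

Definition normalize (R : realType) (n : nat) (v : 'cV[R]_n) : 'cV[R]_n :=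
  (\sum_(l < n) v l 0)^-1 *: v.

Definition nvec (R : realType) (n p c1 k m : nat) : 'cV[R]_n :=
  normalize (prodTheta R n p c1 k m *m e1 R n).

(* Main.v *)
Require Import Defs.
From HB Require Import structures.
From mathcomp Require Import all_boot all_order all_algebra.
From mathcomp Require Import all_classical all_reals all_analysis.
From mathcomp Require Import zify ring lra.
Import Order.TTheory GRing.Theory Num.Theory.
Import numFieldNormedType.Exports.
Local Open Scope classical_set_scope.
Local Open Scope ring_scope.

Section S.
Variable R : realType.

Lemma prodTheta_id n p c1 k m : (m <= k)%N -> prodTheta R n p c1 k m = 1%:M.
Proof. by case: m => //= m Hm; rewrite ifN // -ltnNge. Qed.

Lemma prodTheta_l n p c1 k m : (k < m)%N ->
  prodTheta R n p c1 k m = Theta_k R n p c1 k.+1 *m prodTheta R n p c1 k.+1 m.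
Proof.
elim: m => // m IH Hkm /=.
have Hk : (k <= m)%N by rewrite -ltnS.
rewrite Hk.
case: (ltngtP k m) => [Hlt||Heq]; last 1 first.
- by subst m; rewrite prodTheta_id // mul1mx mulmx1.
- by rewrite IH // -mulmxA.
- move=> ?; lia.
Qed.

Lemma sum_delta (N : nat) (F : 'I_N.+1 -> R) (j : nat) : (j <= N)%N ->
  \sum_(l < N.+1) (((l : nat) == j)%:R * F l) = F (inord j).
Proof.
move=> Hj; rewrite (bigD1 (inord j)) //= inordK // eqxx mul1r big1 ?addr0 //.
move=> l Hl; case: eqP => [E|]; last by rewrite mul0r.
by move: Hl; rewrite -E inord_val eqxx.
Qed.


Definition Ssum (N : nat) (w : 'cV[R]_N.+1) : R :=
  \sum_(l < N.+1) (((l : nat) != 0%N)%:R * w l 0).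

Arguments Ssum {N}.
Arguments sum_delta {N} F {j}.

Lemma mulE N a c (w : 'cV[R]_N.+1) (r : nat) : (r <= N)%N ->
  (Theta R N.+1 a c *m w) (inord r) 0 =
  \sum_(l < N.+1) ((theta_entry N.+1 a c r.+1 l.+1)%:R * w l 0).
Proof.
move=> Hr; rewrite mxE; apply: eq_bigr => l _; by rewrite mxE inordK.
Qed.

Lemma row_first N a c (w : 'cV[R]_N.+1) :
  (Theta R N.+1 a c *m w) (inord 0) 0 = w (inord 0) 0 + c%:R * Ssum w.
Proof.
rewrite mulE // -(sum_delta (fun l => w l 0) (leq0n N)) /Ssum mulr_sumr -big_split /=.
apply: eq_bigr => l _; rewrite /theta_entry /=.
by case: l => -[|l'] Hl /=; ring.
Qed.

Lemma row_last N a c (w : 'cV[R]_N.+1) : (0 < N)%N ->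
  (Theta R N.+1 a c *m w) (inord N) 0 = w (inord 0) 0 + c.+1%:R * Ssum w.
Proof.
move=> HN.
rewrite mulE // -(sum_delta (fun l => w l 0) (leq0n N)) /Ssum mulr_sumr -big_split /=.
apply: eq_bigr => l _; rewrite /theta_entry /= eqxx.
have -> : (N.+1 == 1%N) = false by rewrite eqSS; case: (N) HN.
by case: l => -[|l'] Hl /=; ring.
Qed.

Lemma row_even N a c (w : 'cV[R]_N.+1) i : (1 <= i)%N -> (2 * i < N)%N ->
  (Theta R N.+1 a c *m w) (inord (2 * i).-1) 0 =
   Ssum w + w (inord (2 * i).-1) 0 + w (inord (2 * i)) 0.
Proof.
move=> Hi HiN.
rewrite mulE; last by lia.
rewrite -(sum_delta (fun l => w l 0) (_ : (2 * i).-1 <= N)%N); last by lia.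
rewrite -(sum_delta (fun l => w l 0) (_ : (2 * i) <= N)%N); last by lia.
rewrite /Ssum -!big_split /=.
apply: eq_bigr => l _; rewrite -!mulrDl; congr (_ * _).
rewrite -!natrD; congr (_%:R).
have -> : (2 * i).-1.+1 = (2 * i)%N by lia.
rewrite /theta_entry /= ?oddM /=.
have -> : (2 * i == 1)%N = false by lia.
have -> : (2 * i == N.+1)%N = false by lia.
simpl.
case: l => -[|l'] Hl /=; repeat (case: eqP => ? /=); lia.
Qed.

Lemma row_odd N a c (w : 'cV[R]_N.+1) i : (1 <= i)%N -> (2 * i < N)%N ->
  (Theta R N.+1 a c *m w) (inord (2 * i)) 0 =
   a%:R * w (inord (2 * i).-1) 0 + a.+1%:R * w (inord (2 * i)) 0.
Proof.
move=> Hi HiN.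
rewrite mulE; last by lia.
rewrite -(sum_delta (fun l => w l 0) (_ : (2 * i).-1 <= N)%N); last by lia.
rewrite -(sum_delta (fun l => w l 0) (_ : (2 * i) <= N)%N); last by lia.
rewrite !mulr_sumr -!big_split /=.
apply: eq_bigr => l _; rewrite !mulrA -!natrM -!mulrDl; congr (_ * _).
rewrite -!natrD; congr (_%:R).
rewrite /theta_entry /= ?oddM /=.
have -> : ((2 * i).+1 == 1)%N = false by lia.
have -> : ((2 * i).+1 == N.+1)%N = false by lia.
simpl.
repeat (case: eqP => ? /=); lia.
Qed.


Definition Inv N (p c : R) (x : 'cV[R]_N.+1) :=
  (forall j, 0 <= x j 0) /\
  forall i, (1 <= i)%N -> (2 * i < N)%N ->
    [/\ (p - 1) * x (inord (2 * i)) 0 <= x (inord (2 * i).-1) 0,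
        c * x (inord (2 * i).-1) 0 <= x (inord N) 0
      & (c - 1) * x (inord (2 * i).-1) 0 <= x (inord 0) 0].

Arguments Inv {N}.

Lemma Ssum_ge N (w : 'cV[R]_N.+1) : (0 < N)%N -> (forall j, 0 <= w j 0) ->
  w (inord N) 0 <= Ssum w.
Proof.
move=> HN Hw; rewrite /Ssum (bigD1 (inord N)) //= inordK //.
have -> : (N != 0%N) by case: (N) HN.
rewrite mul1r lerDl; apply: sumr_ge0 => l _; apply: mulr_ge0 => //.
Qed.

Lemma mul_ge0 N a c (w : 'cV[R]_N.+1) : (forall j, 0 <= w j 0) ->
  forall j, 0 <= (Theta R N.+1 a c *m w) j 0.
Proof.
move=> Hw j; rewrite mxE; apply: sumr_ge0 => l _; apply: mulr_ge0 => //.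
by rewrite mxE.
Qed.

Lemma step N (p c : nat) (w : 'cV[R]_N.+1) : (2 <= p)%N -> (0 < N)%N ->
  Inv p%:R (p ^ 2 * c)%N%:R w -> Inv p%:R c%:R (Theta R N.+1 (p * c) c *m w).
Proof.
move=> Hp HN [Hw Hinv]; split; first exact: mul_ge0.
move=> i Hi HiN.
have [hA hB hC] := Hinv i Hi HiN.
rewrite row_first row_last // row_even // row_odd //.
have hS := @Ssum_ge N w HN Hw.
set W0 := w (inord 0) 0 in hC *.
set W1 := w (inord (2 * i).-1) 0 in hA hB hC *.
set W2 := w (inord (2 * i)) 0 in hA hB hC *.
set Wn := w (inord N) 0 in hB hS *.
set S := Ssum w in hS *.
have g0 : 0 <= W0 by apply: Hw.
have g1 : 0 <= W1 by apply: Hw.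
have g2 : 0 <= W2 by apply: Hw.
have pR : 2 <= (p%:R : R) by rewrite (ler_nat R 2 p).
have cR : 0 <= (c%:R : R) by [].
move: hB; rewrite natrM natrX.
set P := (p%:R : R) in pR *.
set C := (c%:R : R) in cR *.
rewrite -[c.+1%:R]natr1 -[(p * c).+1%:R]natr1 natrM -/P -/C.
move=> hB.
have h2 : W2 <= W1 by nra.
have hCW : 2 * C * W1 <= P ^+ 2 * C * W1.
  apply: ler_wpM2r => //; apply: ler_wpM2r => //; nra.
have hPC : 0 <= P * C by nra.
have hA' := ler_wpM2l hPC hA.
split.
- nra.
- nra.
- nra.
Qed.


Lemma cseqS p c1 k : cseq p c1 k.+2 = (p ^ 2 * cseq p c1 k.+1)%N.
Proof. rewrite /cseq /= mulnA -expnD; congr (_ ^ _ * _)%N; lia. Qed.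

Lemma e1_ge0 N (j : 'I_N) : 0 <= e1 R N j 0.
Proof. by rewrite mxE; case: ifP. Qed.

Lemma e1_inv N (P C : R) : Inv P C (e1 R N.+1).
Proof.
split; first exact: e1_ge0.
move=> i Hi HiN.
have z : forall j, (1 <= j <= N)%N -> e1 R N.+1 (inord j) 0 = 0.
  move=> j Hj; rewrite mxE inordK; last by lia.
  by case: eqP => //; lia.
rewrite (z (2 * i)%N); last by lia. rewrite (z (2 * i).-1); last by lia.
rewrite !mulr0; split => //; try apply: e1_ge0.
Qed.

Lemma inv_all N p c1 : (2 <= p)%N -> (0 < N)%N -> forall m k,
  Inv p%:R (cseq p c1 k.+1)%:R (prodTheta R N.+1 p c1 k m *m e1 R N.+1).
Proof.
move=> Hp HN m k.
move: (leqnn (m - k)%N); move: {2}(m - k)%N => d.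
elim: d k => [|d IH] k Hd.
- by rewrite prodTheta_id ?mul1mx; [apply: e1_inv | lia].
- case: (leqP m k) => Hmk.
    by rewrite prodTheta_id ?mul1mx //; apply: e1_inv.
  rewrite prodTheta_l // -mulmxA /Theta_k /aseq.
  apply: step => //; rewrite -cseqS; apply: IH; lia.
Qed.


Lemma inv_helper (d t x y : R) : 0 < d -> 0 <= t -> d * x <= y ->
  t * x <= d^-1 * (t * y).
Proof.
move=> hd ht hxy; rewrite ler_pdivlMl // mulrCA; exact: ler_wpM2l.
Qed.

Lemma lim_le (f g : nat -> R) (a al be : R) :
  f @ \oo --> al -> g @ \oo --> be -> (forall m, a * f m <= g m) -> a * al <= be.
Proof.
move=> hf hg h.
apply: (ler_cvg_to (cvgMl_tmp (a:=a) hf) hg).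
by apply: nearW. Qed.

Lemma norm_inv N (P C : R) (x : 'cV[R]_N.+1) : Inv P C x -> Inv P C (normalize x).
Proof.
move=> [hx hi].
have hs : 0 <= (\sum_(l < N.+1) x l 0)^-1 by rewrite invr_ge0 sumr_ge0.
split.
  by move=> j; rewrite /normalize mxE mulr_ge0.
move=> i Hi HiN; have [hA hB hC] := hi i Hi HiN.
rewrite /normalize !mxE.
set s := (\sum_(l < N.+1) x l 0)^-1 in hs *.
have hA' := ler_wpM2l hs hA.
have hB' := ler_wpM2l hs hB.
have hC' := ler_wpM2l hs hC.
split; rewrite mulrCA //.
Qed.

End S.
Arguments Inv {R N}.
Arguments lim_le {R f g a al be}.

Theorem mainTheorem8 (R : realType) (n p c1 : nat) (lam : nat -> nat -> R) :
  ~~ odd n -> (4 <= n)%N -> (n.+1 <= p)%N -> (0 < c1)%N ->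
  (forall k : nat, exists t : R, 0 < t /\
     exists u : 'I_n -> R,
       (forall j : 'I_n, (fun m : nat => nvec R n p c1 k m j 0) @ \oo --> u j) /\
       (forall j : 'I_n, lam k j.+1 = t * u j)) ->
  forall k i : nat, (1 <= k)%N -> (1 <= i)%N -> (i <= n./2 - 1)%N ->
    [/\ lam k (2 * i).+1 <= (p%:R - 1)^-1 * lam k (2 * i)%N,
        lam k (2 * i)%N <= (cseq p c1 k)%:R^-1 * lam k n
      & ((cseq p c1 k)%:R - 1) * lam k (2 * i)%N <= lam k 1%N].
Proof.
case: n => [|N] //.
move=> Hodd H4 Hp Hc1 Hlim k i Hk Hi Hin.
have Hn2 : (N.+1 = 2 * (N.+1)./2)%N.
  by rewrite -{1}(odd_double_half N.+1) (negbTE Hodd) -mul2n.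
have HiN : (2 * i < N)%N by lia.
have HN : (0 < N)%N by lia.
have Hp2 : (2 <= p)%N by lia.
have [t [ht [u [hu hlam]]]] := Hlim k.
have Hv : forall m, Inv p%:R (cseq p c1 k.+1)%:R (nvec R N.+1 p c1 k m).
  by move=> m; apply: norm_inv; apply: inv_all.
set P := (p%:R : R).
set C' := ((cseq p c1 k.+1)%:R : R).
set Ck := ((cseq p c1 k)%:R : R).
have hCC : Ck <= C'.
  rewrite /Ck /C' ler_nat /cseq.
  have -> : (2 * k.+1.-1 = 2 + 2 * k.-1)%N by lia.
  rewrite expnD -mulnA leq_pmull // expn_gt0; lia.
have hCk : 1 <= Ck.
  rewrite /Ck (ler_nat R 1) /cseq muln_gt0 Hc1 expn_gt0; lia.
have hP : 1 < P by rewrite /P (ltr_nat R 1); lia.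
have hu0 : forall j, 0 <= u j.
  move=> j; have := lim_le (a:=1) (cvg_cst (0:R)) (hu j).
  rewrite mul1r; apply => m.
  by have [h _] := Hv m; apply: h.
have hA : (P - 1) * u (inord (2 * i)) <= u (inord (2 * i).-1).
  apply: (lim_le (hu _) (hu _)) => m.
  by have [_ h] := Hv m; have [] := h i Hi HiN.
have hB : C' * u (inord (2 * i).-1) <= u (inord N).
  apply: (lim_le (hu _) (hu _)) => m.
  by have [_ h] := Hv m; have [] := h i Hi HiN.
have hC : (C' - 1) * u (inord (2 * i).-1) <= u (inord 0).
  apply: (lim_le (hu _) (hu _)) => m.
  by have [_ h] := Hv m; have [] := h i Hi HiN.
have e2 : lam k (2 * i).+1 = t * u (inord (2 * i)).
  by rewrite -hlam inordK //; lia.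
have e1' : lam k (2 * i)%N = t * u (inord (2 * i).-1).
  by rewrite -hlam inordK; [congr (lam k _); lia | lia].
have en : lam k N.+1 = t * u (inord N).
  by rewrite -hlam inordK.
have e0 : lam k 1%N = t * u (inord 0).
  by rewrite -hlam inordK.
rewrite e2 e1' en e0.
have g1 := hu0 (inord (2 * i).-1).
split.
- apply: inv_helper; [lra | lra | exact: hA].
- apply: inv_helper; [lra | lra | nra].
- have h1 : (Ck - 1) * u (inord (2 * i).-1) <= (C' - 1) * u (inord (2 * i).-1).
    by apply: ler_wpM2r => //; lra.
  have h2 := le_trans h1 hC.
  have h3 := ler_wpM2l (ltW ht) h2.
  rewrite mulrCA; exact: h3.
Qed.
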